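(* Let $\pi>0$, $\bar d>0$, $c\ge0$, $0<\theta_1<\dots<\theta_K$, $0\le\beta_1<\dots<\beta_M\le1$, $A:[0,D]\to[0,\bar d]$ continuously differentiable and decreasing, and $J$ an increasing function. Let $L(Q,\beta,\theta)=\theta[\bar d-\beta A(Q)]-\pi(1-\beta)A(Q)$, $\bar S(Q,\Pi,\Lambda)=L(Q,\Lambda)-\Pi$, $\sigma(Q,\beta,\theta)=-[\theta\beta+\pi(1-\beta)]A'(Q)$, $P(Q,\beta)=\pi(1-\beta)A(Q)$, $U(Q,\beta)=\bar d-\beta A(Q)$. Enumerate the $KM$ types as $\Lambda_1,\dots,\Lambda_{KM}$ with $\sigma(Q,\Lambda_1)\le\dots\le\sigma(Q,\Lambda_{KM})$, let $q(\Lambda_i)\ge0$ be the probability of type $\Lambda_i$, and let $\epsilon$ be an index with $\bar S(Q,\Pi,\Lambda_\epsilon)\le\bar S(Q,\Pi,\Lambda_i)$ for all $i$ and all $(Q,\Pi)$. Put $\eta^-(\Lambda_i,Q_i,Q_{i-1})=L(Q_i,\Lambda_i)-L(Q_{i-1},\Lambda_i)$ and $\eta^+(\Lambda_i,Q_i,Q_{i+1})=L(Q_i,\Lambda_i)-L(Q_{i+1},\Lambda_i)$. Fix data caps $\bm Q=(Q_1,\dots,Q_{KM})$ with $0\le Q_1\le\dots\le Q_{KM}\le D$ and consider the problem of choosing $\Pi_1,\dots,\Pi_{KM}\in\mathbb{R}$ to maximize $$\sum_{i=1}^{KM}q(\Lambda_i)\big[\Pi_i+P(Q_i,\Lambda_i)-c\,U(Q_i,\Lambda_i)-J(Q_i)\big]$$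 subject to: $\Pi_\epsilon\le L(Q_\epsilon,\Lambda_\epsilon)$; for $i=1,\dots,\epsilon-1$: $\Pi_i\le\Pi_{i+1}+\eta^+(\Lambda_i,Q_i,Q_{i+1})$ and $\Pi_i\ge\Pi_{i+1}-\eta^-(\Lambda_{i+1},Q_{i+1},Q_i)$; for $i=\epsilon+1,\dots,KM$: $\Pi_i\le\Pi_{i-1}+\eta^-(\Lambda_i,Q_i,Q_{i-1})$ and $\Pi_i\ge\Pi_{i-1}-\eta^+(\Lambda_{i-1},Q_{i-1},Q_i)$. Then the optimal prices are given by $$\Pi^*_\epsilon(\bm Q)=L(Q_\epsilon,\Lambda_\epsilon),\quad \Pi^*_i(\bm Q)=\Pi^*_{i+1}(\bm Q)+\eta^+(\Lambda_i,Q_i,Q_{i+1})\ (i<\epsilon),\quad \Pi^*_i(\bm Q)=\Pi^*_{i-1}(\bm Q)+\eta^-(\Lambda_i,Q_i,Q_{i-1})\ (i>\epsilon).$$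
   Context: Model: a mobile network operator offers one item (data cap $Q_i$, subscription fee $\Pi_i$) for each user type $\Lambda_i=(\beta,\theta)$ (network substitutability $\beta$, data valuation $\theta$); $\pi$ is the overage price, $\bar d$ the mean demand, $A(Q)$ the expected overage consumption under cap $Q$ (decreasing, convex). The objective is the operator's expected profit: subscription plus overage revenue $P$, minus operational cost $c\,U$ ($U$ = expected consumption) and capacity cost $J$. The constraints are sufficient conditions for individual rationality and incentive compatibility. $\sigma$ is the willingness-to-pay, $\Lambda_\epsilon$ the smallest-payoff type. *)

(* Defs.v *)
(* R : realType. Types Lambda = (beta, theta) : R * R. *)
From HB Require Import structures.
From mathcomp Require Import all_boot all_order all_algebra.
From mathcomp Require Import all_classical all_reals all_analysis.
Set Implicit Arguments. Unset Strict Implicit. Unset Printing Implicit Defensive.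
Import Order.TTheory GRing.Theory Num.Theory.
Local Open Scope ring_scope.

Section Model.
Variables (R : realType) (pi dbar : R) (A : R -> R).

Definition Lfun (Q : R) (Lam : R * R) : R :=
  Lam.2 * (dbar - Lam.1 * A Q) - pi * (1 - Lam.1) * A Q.

Definition Sbar (Q Pi : R) (Lam : R * R) : R := Lfun Q Lam - Pi.

Definition Pover (Q : R) (Lam : R * R) : R := pi * (1 - Lam.1) * A Q.

Definition Ucons (Q : R) (Lam : R * R) : R := dbar - Lam.1 * A Q.

Definition eta_minus (Lam : R * R) (Qi Qprev : R) : R := Lfun Qi Lam - Lfun Qprev Lam.
Definition eta_plus (Lam : R * R) (Qi Qnext : R) : R := Lfun Qi Lam - Lfun Qnext Lam.

(* Constraints of the pricing problem (0-based indices: paper index i is i-1 here,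
   eps is the 0-based index of Lambda_epsilon, n = K M). *)
Definition feasible (n eps : nat) (Lam : nat -> R * R) (Q Pi : nat -> R) : Prop :=
  Pi eps <= Lfun (Q eps) (Lam eps) /\
  (forall i, (i < eps)%N ->
     Pi i <= Pi i.+1 + eta_plus (Lam i) (Q i) (Q i.+1) /\
     Pi i >= Pi i.+1 - eta_minus (Lam i.+1) (Q i.+1) (Q i)) /\
  (forall i, (eps < i)%N -> (i < n)%N ->
     Pi i <= Pi i.-1 + eta_minus (Lam i) (Q i) (Q i.-1) /\
     Pi i >= Pi i.-1 - eta_plus (Lam i.-1) (Q i.-1) (Q i)).

Definition profit (n : nat) (c : R) (J : R -> R) (q : nat -> R)
    (Lam : nat -> R * R) (Q Pi : nat -> R) : R :=
  \sum_(i < n) q i * (Pi i + Pover (Q i) (Lam i) - c * Ucons (Q i) (Lam i) - J (Q i)).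

Definition opt_prices (n eps : nat) (Lam : nat -> R * R) (Q Pst : nat -> R) : Prop :=
  Pst eps = Lfun (Q eps) (Lam eps) /\
  (forall i, (i < eps)%N -> Pst i = Pst i.+1 + eta_plus (Lam i) (Q i) (Q i.+1)) /\
  (forall i, (eps < i)%N -> (i < n)%N -> Pst i = Pst i.-1 + eta_minus (Lam i) (Q i) (Q i.-1)).

End Model.

Definition sigma (R : realType) (pi : R) (dA : R -> R) (Q : R) (Lam : R * R) : R :=
  - ((Lam.2 * Lam.1 + pi * (1 - Lam.1)) * dA Q).

(* Main.v *)
Require Import Defs.
From HB Require Import structures.
From mathcomp Require Import all_boot all_order all_algebra.
From mathcomp Require Import all_classical all_reals all_analysis.
Import Order.TTheory GRing.Theory Num.Theory.
Import numFieldNormedType.Exports.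
Local Open Scope classical_set_scope.
Local Open Scope ring_scope.
From mathcomp Require Import ring lra zify.

Lemma key (R : realType) (D : R) (A dA : R -> R) (w w' x y : R) :
  {within [set x | 0 <= x <= D], continuous A} ->
  {in `]0, D[, forall x, is_derive x (1 : R) A (dA x)} ->
  {in `[0, D] &, forall x y, x <= y -> A y <= A x} ->
  (forall v, 0 <= v <= D -> - (w * dA v) <= - (w' * dA v)) ->
  0 <= x <= D -> 0 <= y <= D -> x <= y ->
  0 <= (w' - w) * (A x - A y).
Proof.
move=> cA dAd Adec hw /andP[x0 xD] /andP[y0 yD] xy.
have Axy : A y <= A x by apply: Adec => //; rewrite in_itv /= ?x0 ?xD ?y0 ?yD.
have [ww|ww] := leP w w'.
  by apply: mulr_ge0; lra.
rewrite le_eqVlt in xy; case/orP: xy => [/eqP ->|xy]; first by rewrite subrr mulr0.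
have [c cin eq] : exists2 c, c \in `]x, y[ & A y - A x = dA c * (y - x).
  apply: MVT => //.
    move=> z; rewrite in_itv /= => /andP[h1 h2]; apply: dAd.
    rewrite in_itv /=; apply/andP; split; lra.
  apply: continuous_subspaceW cA => z /=; rewrite in_itv /= => /andP[h1 h2].
  apply/andP; split; lra.
move: cin; rewrite in_itv /= => /andP[c1 c2].
have hc := hw c.
have : 0 <= c <= D by apply/andP; split; lra.
move/hc => hc'.
have dc : 0 <= dA c.
  have : 0 <= (w - w') * dA c by nra.
  rewrite pmulr_rge0 //; lra.
have : 0 <= A y - A x by rewrite eq; apply: mulr_ge0 => //; lra.
move=> h; have -> : A x - A y = 0 by lra.
by rewrite mulr0.
Qed.

Theorem theorem3 (R : realType) (pi dbar c D : R) (K M : nat)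
  (theta : 'I_K -> R) (beta : 'I_M -> R)
  (A dA J : R -> R) (Lam : nat -> R * R) (q : nat -> R) (eps : nat) (Q : nat -> R) :
  0 < pi -> 0 < dbar -> 0 <= c ->
  (forall k, 0 < theta k) -> {homo theta : k l / (k < l)%N >-> k < l} ->
  (forall m, 0 <= beta m <= 1) -> {homo beta : m l / (m < l)%N >-> m < l} ->
  (* A : [0,D] -> [0,dbar], continuously differentiable (derivative dA), decreasing *)
  {in `[0, D], forall x, 0 <= A x <= dbar} ->
  {within [set x | 0 <= x <= D], continuous A} ->
  {in `]0, D[, forall x, is_derive x (1 : R) A (dA x)} ->
  {within [set x | 0 <= x <= D], continuous dA} ->
  {in `[0, D] &, forall x y, x <= y -> A y <= A x} ->
  (* J increasing *)
  {in `[0, D] &, forall x y, x <= y -> J x <= J y} ->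
  (* Lam enumerates the K*M types (beta_m, theta_k) bijectively *)
  (forall i, (i < K * M)%N -> exists k m, Lam i = (beta m, theta k)) ->
  (forall k m, exists i, (i < K * M)%N /\ Lam i = (beta m, theta k)) ->
  (* ordering by willingness-to-pay *)
  (forall Qv, 0 <= Qv <= D -> forall i, (i.+1 < K * M)%N ->
     sigma pi dA Qv (Lam i) <= sigma pi dA Qv (Lam i.+1)) ->
  (* type probabilities *)
  (forall i, (i < K * M)%N -> 0 <= q i) -> \sum_(i < K * M) q i = 1 ->
  (* smallest-payoff type *)
  (eps < K * M)%N ->
  (forall Qv Piv, 0 <= Qv <= D -> forall i, (i < K * M)%N ->
     Sbar pi dbar A Qv Piv (Lam eps) <= Sbar pi dbar A Qv Piv (Lam i)) ->
  (* data caps *)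
  (forall i, (i < K * M)%N -> 0 <= Q i <= D) ->
  (forall i, (i.+1 < K * M)%N -> Q i <= Q i.+1) ->
  (exists Pst, opt_prices pi dbar A (K * M) eps Lam Q Pst) /\
  (forall Pst, opt_prices pi dbar A (K * M) eps Lam Q Pst ->
     feasible pi dbar A (K * M) eps Lam Q Pst /\
     forall Pi, feasible pi dbar A (K * M) eps Lam Q Pi ->
       profit pi dbar A (K * M) c J q Lam Q Pi <= profit pi dbar A (K * M) c J q Lam Q Pst).
Proof.
move=> pi0 d0 c0 th0 thh b01 bh Ar cA dAd cdA Adec Jinc Lsur Linj sig q0 q1 epsn Sb Qr Qm.
set n := (K * M)%N.
have cross : forall j, (j.+1 < n)%N ->
  0 <= eta_plus pi dbar A (Lam j) (Q j) (Q j.+1) + eta_minus pi dbar A (Lam j.+1) (Q j.+1) (Q j).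
  move=> j jn.
  have -> : eta_plus pi dbar A (Lam j) (Q j) (Q j.+1) + eta_minus pi dbar A (Lam j.+1) (Q j.+1) (Q j)
    = ((Lam j.+1).2 * (Lam j.+1).1 + pi * (1 - (Lam j.+1).1) - ((Lam j).2 * (Lam j).1 + pi * (1 - (Lam j).1)))
      * (A (Q j) - A (Q j.+1)).
    rewrite /eta_plus /eta_minus /Defs.Lfun; ring.
  apply: (@key R D A dA _ _ (Q j) (Q j.+1) cA dAd Adec)...
  - by move=> v hv; have := sig v hv j jn; rewrite /sigma.
  - by apply: Qr; apply: ltn_trans jn.
  - exact: Qr.
  - exact: Qm.
set L0 := Defs.Lfun pi dbar A (Q eps) (Lam eps).
set ep := fun j => eta_plus pi dbar A (Lam j) (Q j) (Q j.+1).
set em := fun j => eta_minus pi dbar A (Lam j) (Q j) (Q j.-1).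
have opt_le : forall Pst, opt_prices pi dbar A n eps Lam Q Pst ->
    forall Pi, feasible pi dbar A n eps Lam Q Pi -> forall i, (i < n)%N -> Pi i <= Pst i.
  move=> Pst [P1 [P2 P3]] Pi [F1 [F2 F3]].
  have lo : forall k, (k <= eps)%N -> Pi (eps - k)%N <= Pst (eps - k)%N.
    elim=> [|k IH] hk; first by rewrite subn0 P1.
    have e : (eps - k)%N = (eps - k.+1).+1 by lia.
    have hl : (eps - k.+1 < eps)%N by lia.
    rewrite P2 //; have [h _] := F2 _ hl; apply: (le_trans h).
    by rewrite lerD2r -e; apply: IH; lia.
  have hi : forall k, (eps + k < n)%N -> Pi (eps + k)%N <= Pst (eps + k)%N.
    elim=> [|k IH] hk; first by rewrite addn0 P1.
    have e : (eps + k.+1).-1 = (eps + k)%N by lia.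
    have h1 : (eps < eps + k.+1)%N by lia.
    rewrite P3 //; have [h _] := F3 _ h1 hk; apply: (le_trans h).
    by rewrite lerD2r e; apply: IH; lia.
  move=> i hi'; have [ie|ie] := leqP i eps.
    have -> : i = (eps - (eps - i))%N by lia.
    apply: lo; lia.
  have -> : i = (eps + (i - eps))%N by lia.
  apply: hi; lia.
split.
  exists (fun i => if (i <= eps)%N then L0 + \sum_(i <= j < eps) ep j
                   else L0 + \sum_(eps.+1 <= j < i.+1) em j).
  split; first by rewrite leqnn big_geq ?addr0.
  split.
    move=> i ie; rewrite ltnW // ie big_ltn //; rewrite /ep; ring.
  move=> i ie _; rewrite leqNgt ie /=.
  rewrite big_nat_recr //=.
  case: i ie => [//|i] ie /=.
  case: leqP => h.
    have -> : i = eps by lia.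
    by rewrite !big_geq //; rewrite /em /= !add0r addr0.
  by rewrite addrA.
move=> Pst Hp; split.
  case: (Hp) => [P1 [P2 P3]].
  split; first by rewrite P1.
  split.
    move=> i ie; rewrite P2 //; split; first by [].
    have := cross i (leq_ltn_trans ie epsn); lra.
  move=> i ie ilt; rewrite P3 //; split; first by [].
  case: i ie ilt => [//|i] ie ilt /=.
  have := cross i ilt; rewrite /em /=; lra.
move=> Pi Hf; rewrite /profit; apply: ler_sum => i _.
apply: ler_wpM2l; first exact: q0.
by rewrite !lerD2r; apply: (opt_le _ Hp _ Hf).
Qed.
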